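(* Let $E$ be a finite set and let $\mathcal{W}\subseteq\{+,-,0\}^E$ satisfy (A1), (A2), (A3). Let $N_1,N_2\in\mathcal{P}(\mathcal{W})$ with $\underline{N_1}=\underline{N_2}$ and $N_1\neq N_2$, where $N_1=U+(-U')$ for some $U,U'\in\mathrm{asym}(\mathcal{W})$ with $\underline{U}=\underline{U'}$ and $I(U,-U')\cap\mathcal{W}=I(-U,U')\cap\mathcal{W}=\emptyset$. Let $V=(-N_2)\circ U$. Then the pair $(X,Y)=(U,V)$ does not satisfy all the conditions in the definition of $\mathcal{P}(\mathcal{W})$, i.e. it does not witness that $U+(-V)\in\mathcal{P}(\mathcal{W})$.
   Context: For $X\in\{+,-,0\}^E$: $X^+=\{e:X_e=+\}$, $X^-=\{e:X_e=-\}$, support $\underline{X}=X^+\cup X^-$; $(-X)_e=-X_e$; composition $(X\circ Y)_e=X_e$ if $X_e\neq0$, else $Y_e$; $S(X,Y)=(X^+\cap Y^-)\cup(X^-\cap Y^+)$; $\mathcal{A}\circ\mathcal{B}=\{A\circ B\}$. For $X,Y$ with $\underline{X}=\underline{Y}$, $X\neq Y$, $e\in S(X,Y)$: $I_e(X,Y)=\{V : \underline{V}\subseteq\underline{X}\setminus\{e\}, V_f=X_f\ \forall f\notin S(X,Y)\}$, $I(X,Y)=\bigcup_{e\in S(X,Y)}I_e(X,Y)$. Sum: $(X+Y)_e=0$ if $e\in S(X,Y)$, else $(X\circ Y)_e$. $\mathrm{asym}(\mathcal{W})=\{V\in\mathcal{W}:-V\notin\mathcal{W}\}$; $\mathcal{P}(\mathcal{W})=\{X+(-Y):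 X,Y\in\mathrm{asym}(\mathcal{W}), \underline{X}=\underline{Y}, I(X,-Y)\cap\mathcal{W}=I(-X,Y)\cap\mathcal{W}=\emptyset\}$; a pair $(X,Y)$ witnesses $X+(-Y)\in\mathcal{P}(\mathcal{W})$ if it satisfies all these conditions. Axioms: (A1) $X,Y\in\mathcal{W}\Rightarrow X\circ Y\in\mathcal{W}$ and $X\circ(-Y)\in\mathcal{W}$; (A2) if $X,Y\in\mathcal{W}$ with $\underline{X}=\underline{Y}$ then $I_e(X,Y)\cap\mathcal{W}\neq\emptyset$ for every $e\in S(X,Y)$; (A3) $\mathcal{P}(\mathcal{W})\circ\mathcal{W}\subseteq\mathcal{W}$. *)

(* Defs.v *)
From HB Require Import structures.
From mathcomp Require Import all_boot.
Set Implicit Arguments. Unset Strict Implicit. Unset Printing Implicit Defensive.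

Inductive sgn := SP | SM | S0.

Definition sgn_eqb (a b : sgn) : bool :=
  match a, b with SP, SP | SM, SM | S0, S0 => true | _, _ => false end.
Lemma sgn_eqP : Equality.axiom sgn_eqb.
Proof. by case; case; constructor. Qed.
HB.instance Definition _ := hasDecEq.Build sgn sgn_eqP.

Definition sopp (a : sgn) : sgn := match a with SP => SM | SM => SP | S0 => S0 end.

Section SignVectors.
Variable E : finType.
Notation vec := {ffun E -> sgn}.

Definition posp (X : vec) : {set E} := [set e | X e == SP].
Definition negp (X : vec) : {set E} := [set e | X e == SM].
Definition supp (X : vec) : {set E} := posp X :|: negp X.
Definition vopp (X : vec) : vec := [ffun e => sopp (X e)].
Definition vcomp (X Y : vec) : vec := [ffun e => if X e != S0 then X e else Y e].
Definition sepset (X Y : vec) : {set E} :=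
  (posp X :&: negp Y) :|: (negp X :&: posp Y).
Definition Ie (X Y : vec) (e : E) (V : vec) : Prop :=
  supp V \subset supp X :\ e /\ (forall f, f \notin sepset X Y -> V f = X f).
Definition Iset (X Y : vec) (V : vec) : Prop :=
  exists2 e, e \in sepset X Y & Ie X Y e V.
Definition vsum (X Y : vec) : vec :=
  [ffun e => if e \in sepset X Y then S0 else vcomp X Y e].

Variable W : vec -> Prop.
Definition asym (V : vec) : Prop := W V /\ ~ W (vopp V).
Definition witnesses (X Y : vec) : Prop :=
  [/\ asym X, asym Y, supp X = supp Y,
      (forall V, Iset X (vopp Y) V -> ~ W V) &
      (forall V, Iset (vopp X) Y V -> ~ W V)].
Definition inP (N : vec) : Prop :=
  exists X Y, witnesses X Y /\ N = vsum X (vopp Y).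

Definition A1 : Prop := forall X Y, W X -> W Y -> W (vcomp X Y) /\ W (vcomp X (vopp Y)).
Definition A2 : Prop := forall X Y, W X -> W Y -> supp X = supp Y ->
  forall e, e \in sepset X Y -> exists V, Ie X Y e V /\ W V.
Definition A3 : Prop := forall N Z, inP N -> W Z -> W (vcomp N Z).
End SignVectors.

(* Main.v *)
Require Import Defs.
From mathcomp Require Import all_boot.

Lemma in_supp (E : finType) (X : {ffun E -> sgn}) e : (e \in supp X) = (X e != S0).
Proof. by rewrite /supp /posp /negp !inE; case: (X e). Qed.

Lemma in_sep (E : finType) (X Y : {ffun E -> sgn}) e : (e \in sepset X Y) =
  [|| (X e == SP) && (Y e == SM) | (X e == SM) && (Y e == SP)].
Proof. by rewrite /sepset !inE. Qed.

Theorem lemma4p1 (E : finType) (W : {ffun E -> sgn} -> Prop) :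
  A1 W -> A2 W -> A3 W ->
  forall N1 N2 U U' : {ffun E -> sgn},
    inP W N1 -> inP W N2 -> supp N1 = supp N2 -> N1 <> N2 ->
    witnesses W U U' -> N1 = vsum U (vopp U') ->
    ~ witnesses W U (vcomp (vopp N2) U).
Proof.
move=> _ HA2 HA3 N1 N2 U U' HN1 HN2 Hs Hne [HU HU' HsU _ _] HN1e [_ HV _ HI _].
have WU : W U := HU.1.
have WZ : W (vcomp N2 U) := HA3 _ _ HN2 WU.
have suppeq : forall g, (U g == S0) = (U' g == S0).
  move=> g; have := HsU; move/setP/(_ g); rewrite !in_supp.
  by case: (U g); case: (U' g).
have N2eq : forall g, (N1 g == S0) = (N2 g == S0).
  move=> g; have := Hs; move/setP/(_ g); rewrite !in_supp.
  by case: (N1 g); case: (N2 g).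
have hN1 : forall g, N1 g = (if U g == U' g then S0 else U g).
  move=> g; rewrite HN1e /vsum /vcomp /vopp !ffunE in_sep ffunE.
  by have := suppeq g; case: (U g); case: (U' g).
have hN2 : forall g, (N2 g == S0) = (if U g == U' g then true else U g == S0).
  by move=> g; rewrite -N2eq hN1; case: (U g == U' g).
have Hsupp : supp U = supp (vcomp N2 U).
  apply/setP => g; rewrite !in_supp /vcomp ffunE.
  by have := hN2 g; case: (U g); case: (U' g); case: (N2 g).
have : ~~ [forall f, N1 f == N2 f].
  apply/negP => /forallP H; apply: Hne; apply/ffunP => x; apply/eqP; exact: H.
move/forallPn => [f Hf].
have Hf' : f \in sepset U (vcomp N2 U).
  move: Hf; rewrite in_sep /vcomp ffunE hN1.
  by have := hN2 f; case: (U f); case: (U' f); case: (N2 f).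
have [T [[HTs HTf] WT]] := HA2 U _ WU WZ Hsupp f Hf'.
apply: (HI T) WT; exists f.
  move: Hf; rewrite in_sep /vcomp /vopp !ffunE hN1.
  by have := hN2 f; case: (U f); case: (U' f); case: (N2 f).
split => // g Hg; apply: HTf; apply: contra Hg.
rewrite !in_sep /vcomp /vopp !ffunE.
by have := hN2 g; case: (U g); case: (U' g); case: (N2 g).
Qed.
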